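(* Suppose an SCF $f:\Theta\to Z$ is mixed-Nash-implemented by a mechanism $\mathcal M=\langle M,g\rangle$. Let $(i,\theta)\in\mathcal I\times\Theta$ and $\lambda\in MNE^{(\mathcal M,\theta)}$. If $f(\theta)\in\arg\min_{z\in Z}u_i^\theta(z)$ and $\mathcal L_i^Z(f(\theta),\theta)$ is an $i$-max set, then $$\bigcup_{m_i\in M_i}\mathrm{SUPP}\big[g(m_i,\lambda_{-i})\big]=\{f(\theta)\}.$$
   Context: Standing setup: $\mathcal I=\{1,\dots,I\}$ is a finite set of agents with $I\ge 3$; $\Theta$ is a finite or countably infinite set of states; $Z$ is a finite set of pure outcomes; $Y=\Delta(Z)$ is the set of lotteries on $Z$, and each $z\in Z$ is identified with the degenerate lottery at $z$. For each $(i,\theta)$, $u_i^\theta:Z\to\mathbb R$ is a Bernoulli utility and $U_i^\theta(y)=\sum_{z\in Z}y_z u_i^\theta(z)$ for $y\in Y$. For $\alpha\in Y$: $\mathcal L_i^Y(\alpha,\theta)=\{y\in Y:U_i^\theta(\alpha)\ge U_i^\theta(y)\}$ and $\mathcal L_i^Z(\alpha,\theta)=\{z\in Z:U_i^\theta(\alpha)\ge u_i^\theta(z)\}$. $\mathrm{SUPP}[\mu]$ is the support of a probability $\mu$. A mechanism is $\mathcal M=\langle M=\times_{i}M_i,\ g:M\to Y\rangle$ with each $M_i$ countable; for a profile of mixed strategies $\lambda=(\lambda_i)_i\in\times_i\Delta(M_i)$ (or a mixture of pure and mixed strategies, e.g. $(m_i,\lambda_{-i})$), $g(\lambda)$ denotes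 the induced lottery on $Z$. $PNE^{(\mathcal M,\theta)}$ and $MNE^{(\mathcal M,\theta)}$ are the sets of pure- and mixed-strategy Nash equilibria of $\mathcal M$ at $\theta$ (agents maximize $U_i^\theta$ of the induced lottery). An SCF $f:\Theta\to Z$ is mixed-Nash-implemented by $\mathcal M$ if $\bigcup_{\lambda\in MNE^{(\mathcal M,\theta)}}\mathrm{SUPP}(g[\lambda])=\{f(\theta)\}$ for all $\theta\in\Theta$. For $(i,\theta)$, a nonempty $E\subseteq Z$ is an $i$-$\theta$-max set if $E\subseteq\arg\max_{z\in E}u_i^\theta(z)$ and $E\subseteq\arg\max_{z\in Z}u_j^\theta(z)$ for all $j\ne i$; $E$ is an $i$-max set if it is an $i$-$\theta$-max set for some $\theta\in\Theta$. *)

(* Defs.v *)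
From HB Require Import structures.
From mathcomp Require Import all_boot all_order all_algebra.
From mathcomp Require Import classical_sets reals constructive_ereal ereal esum.
Set Implicit Arguments. Unset Strict Implicit. Unset Printing Implicit Defensive.
Import Order.TTheory GRing.Theory Num.Theory.
Local Open Scope ring_scope.

Section Defs.
Variables (R : realType) (Z : finType).

Definition is_lottery (y : Z -> R) : Prop :=
  (forall z, 0 <= y z) /\ \sum_(z : Z) y z = 1.

Definition EU (u : Z -> R) (y : Z -> R) : R := \sum_(z : Z) y z * u z.

Definition SUPP (y : Z -> R) : set Z := [set z | 0 < y z].

Variables (n : nat) (M : 'I_n -> countType).

Definition profile := {dffun forall i : 'I_n, M i}.

Definition is_mechanism (g : profile -> Z -> R) : Prop :=
  forall m, is_lottery (g m).

Definition is_mixed (i : 'I_n) (p : M i -> R) : Prop :=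
  (forall x, 0 <= p x) /\ (\esum_(x in [set: M i]) (p x)%:E = 1)%E.

Definition mixed_profile := forall i : 'I_n, M i -> R.

Definition is_mixed_profile (lam : mixed_profile) : Prop :=
  forall i, is_mixed (lam i).

Definition dirac (i : 'I_n) (x : M i) : M i -> R :=
  fun y => if y == x then 1 else 0.

Definition deviate (lam : mixed_profile) (i : 'I_n) (p : M i -> R) : mixed_profile :=
  dfwith lam p.

Definition induced (g : profile -> Z -> R) (lam : mixed_profile) : Z -> R :=
  fun z => fine (\esum_(m in [set: profile])
                   ((\prod_(j < n) lam j (m j)) * g m z)%:E).

Variable (Theta : countType).
Variable (u : 'I_n -> Theta -> Z -> R).

Definition MNE (g : profile -> Z -> R) (th : Theta) (lam : mixed_profile) : Prop :=
  is_mixed_profile lam /\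
  forall (i : 'I_n) (p : M i -> R), is_mixed p ->
    EU (u i th) (induced g (deviate lam p)) <= EU (u i th) (induced g lam).

Definition mixed_Nash_implements (g : profile -> Z -> R) (f : Theta -> Z) : Prop :=
  forall th z,
    (exists lam, MNE g th lam /\ SUPP (induced g lam) z) <-> z = f th.

End Defs.

Section MaxSets.
Variables (R : realType) (Z : finType) (n : nat) (Theta : Type).
Variable (u : 'I_n -> Theta -> Z -> R).

Definition is_i_th_max_set (i : 'I_n) (th : Theta) (E : set Z) : Prop :=
  (exists z, E z) /\
  (forall z, E z -> forall z', E z' -> u i th z' <= u i th z) /\
  (forall j, j != i -> forall z, E z -> forall z', u j th z' <= u j th z).

Definition is_i_max_set (i : 'I_n) (E : set Z) : Prop :=
  exists th, is_i_th_max_set i th E.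

(* L_i^Z(alpha, th) for a degenerate lottery alpha = a. *)
Definition LZ (i : 'I_n) (a : Z) (th : Theta) : set Z :=
  [set z | u i th z <= u i th a].
End MaxSets.

(* Main.v *)
Require Import Defs.
From HB Require Import structures.
From mathcomp Require Import all_boot all_order all_algebra.
From mathcomp Require Import classical_sets reals constructive_ereal ereal esum.
From mathcomp Require Import boolp functions cardinality fsbigop.
Set Implicit Arguments. Unset Strict Implicit.
Import Order.TTheory GRing.Theory Num.Theory.
Local Open Scope ring_scope.
Local Open Scope classical_set_scope.

Lemma esumZl (R : realType) (T : choiceType) (I : set T) (a : T -> \bar R) (c : R) :
  0 <= c -> (forall i, (0 <= a i)%E) ->
  \esum_(i in I) (c%:E * a i)%E = (c%:E * \esum_(i in I) a i)%E.
Proof.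
move=> c0 a0; rewrite /esum -ereal_supZl //; last first.
  by apply/set0P; exists 0%E; exists set0; [exact: fsets_set0|rewrite fsbig_set0].
rewrite image_comp; congr ereal_sup; apply: eq_imagel => A _ /=.
by rewrite ge0_mule_fsumr.
Qed.

Section Weight.
Variables (R : realType) (n : nat) (M : 'I_n -> countType).
Local Open Scope classical_set_scope.

Definition Dset (d : profile M) (S : {set 'I_n}) : set (profile M) :=
  [set m | forall j, j \notin S -> m j = d j].
Definition wS (L : mixed_profile R M) (S : {set 'I_n}) (m : profile M) : R :=
  \prod_(j in S) L j (m j).
Definition upd (m : profile M) (k : 'I_n) (x : M k) : profile M :=
  finfun (dfwith (fun j => m j) x).
Arguments upd m {k} x.

Lemma upd_in m k (x : M k) : upd m x k = x.
Proof. by rewrite /upd ffunE dfwith_in. Qed.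
Lemma upd_out m k (x : M k) j : k != j -> upd m x j = m j.
Proof. by move=> kj; rewrite /upd ffunE dfwith_out. Qed.

Lemma wS_ge0 (L : mixed_profile R M) S m : (forall j x, 0 <= L j x) -> 0 <= wS L S m.
Proof. by move=> H; apply: prodr_ge0 => j _. Qed.

Lemma esum_step (L : mixed_profile R M) (d : profile M) (S : {set 'I_n}) (k : 'I_n) : (forall j x, 0 <= L j x) -> k \notin S ->
  \esum_(m in Dset d (k |: S)) (wS L (k |: S) m)%:E =
  \esum_(x in [set: M k]) ((L k x)%:E * \esum_(m in Dset d S) (wS L S m)%:E)%E.
Proof.
move=> L0 kS.
have -> : Dset d (k |: S) =
   (fun p : M k * profile M => upd p.2 p.1) @` ([set: M k] `*`` fun _ => Dset d S).
  apply/seteqP; split => m.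
    move=> Hm; exists (m k, upd m (d k)).
      split => //= j jS; have [<-|kj] := eqVneq k j; first by rewrite upd_in.
      by rewrite upd_out // Hm // in_setU1 negb_or eq_sym kj.
    apply/ffunP => j /=; have [<-|kj] := eqVneq k j; first by rewrite upd_in.
    by rewrite !upd_out.
  move=> [[x m'] [_ /= Hm'] <-] j; rewrite in_setU1 negb_or => /andP[kj jS].
  by rewrite upd_out 1?eq_sym // Hm'.
rewrite esum_image; last first.
  move=> [x1 m1] [x2 m2]; rewrite !inE => -[_ /= H1] [_ /= H2] /= E.
  have ex : x1 = x2 by rewrite -(upd_in m1 x1) -(upd_in m2 x2) E.
  subst x2; congr pair; apply/ffunP => j.
  have [<-|kj] := eqVneq k j; first by rewrite H1 // H2.
  by rewrite -(upd_out m1 x1 kj) -(upd_out m2 x1 kj) E.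
rewrite -(@esum_esum _ _ _ setT (fun _ => Dset d S) (fun (x : M k) (m : profile M) =>
          (wS L (k |: S) (upd m x))%:E)); last first.
  by move=> x m _ _; rewrite lee_fin wS_ge0.
apply: eq_esum => x _.
rewrite -esumZl ?lee_fin //; last by move=> m; rewrite lee_fin wS_ge0.
apply: eq_esum => m _.
rewrite -EFinM /wS big_setU1 //= upd_in; congr (_ * _)%:E.
apply: eq_bigr => j jS; rewrite upd_out //.
by apply: contraNneq kS => ->.
Qed.
End Weight.

Lemma mixed_nonempty (R : realType) (n : nat) (M : 'I_n -> countType) (i : 'I_n)
  (p : M i -> R) : is_mixed p -> exists x : M i, True.
Proof.
move=> [_ H]; have [//|N] := pselect (exists x : M i, True).
have E : [set: M i] = (set0 : set (M i)).
  by apply/seteqP; split => x // _; apply: N; exists x.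
by move: H; rewrite E esum_set0 => -[] /esym/eqP; rewrite oner_eq0.
Qed.

Arguments mixed_nonempty {R n M i p}.
Section Weight2.
Variables (R : realType) (n : nat) (M : 'I_n -> countType).
Local Open Scope classical_set_scope.

Lemma weight_sum (L : mixed_profile R M) : (forall j, is_mixed (L j)) ->
  \esum_(m in [set: profile M]) (\prod_(j < n) L j (m j))%:E = 1%E.
Proof.
move=> HL.
have L0 : forall j x, 0 <= L j x by move=> j x; case: (HL j) => + _; apply.
have ne : forall j, exists x : M j, xpredT x.
  by move=> j; case: (mixed_nonempty (HL j)) => x _; exists x.
pose d : profile M := finfun (fun j => xchoose (ne j)).
have step : forall k, (k <= n)%N ->
  \esum_(m in Dset d [set j : 'I_n | (j < k)%N]) (wS L [set j : 'I_n | (j < k)%N] m)%:E = 1%E.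
  elim=> [_|k IH kn].
    rewrite (_ : Dset _ _ = [set d]); last first.
      apply/seteqP; split => m /=.
        by move=> H; apply/ffunP => j; apply: H; rewrite inE.
      by move=> -> j.
    rewrite esum_set1 ?lee_fin ?wS_ge0 //.
    by rewrite /wS big1 // => j; rewrite inE.
  have -> : [set j : 'I_n | (j < k.+1)%N]%SET = ((Ordinal kn) |: [set j : 'I_n | (j < k)%N])%SET.
    by apply/setP => j; rewrite !inE ltnS leq_eqVlt.
  rewrite esum_step //; last by rewrite inE /= ltnn.
  rewrite (eq_esum (b := fun x => (L (Ordinal kn) x)%:E)); first by case: (HL (Ordinal kn)).
  by move=> x _; rewrite IH ?mule1 // ltnW.
have := step n (leqnn n).
rewrite (_ : Dset _ _ = setT); last first.
  by apply/seteqP; split => m // _ j; rewrite inE ltn_ord.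
move=> <-; apply: eq_esum => m _; congr (_)%:E.
by rewrite /wS; apply: eq_bigl => j; rewrite inE ltn_ord.
Qed.
End Weight2.

Unset Implicit Arguments.
Section Induced.
Variables (R : realType) (Z : finType) (n : nat) (M : 'I_n -> countType).
Variable g : profile M -> Z -> R.
Hypothesis Hg : is_mechanism g.

Lemma g_ge0 m z : 0 <= g m z.
Proof. by case: (Hg m) => + _; apply. Qed.

Lemma g_le1 m z : g m z <= 1.
Proof.
case: (Hg m) => H0 <-; rewrite (bigD1 z) //= lerDl.
by apply: sumr_ge0 => ? _; apply: H0.
Qed.

Variable L : mixed_profile R M.
Hypothesis HL : is_mixed_profile L.

Let L0 j x : 0 <= L j x.
Proof. by case: (HL j) => + _; apply. Qed.

Let w_ge0 (m : profile M) : 0 <= \prod_(j < n) L j (m j).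
Proof. by apply: prodr_ge0 => j _. Qed.

Let Ez z := \esum_(m in [set: profile M]) ((\prod_(j < n) L j (m j)) * g m z)%:E.

Let Ez_ge0 z : (0 <= Ez z)%E.
Proof. by apply: esum_ge0 => m _; rewrite lee_fin mulr_ge0 ?g_ge0 ?w_ge0. Qed.

Let Ez_le1 z : (Ez z <= 1)%E.
Proof.
rewrite -(weight_sum HL); apply: le_esum => m _.
by rewrite lee_fin ler_piMr ?g_le1 ?w_ge0.
Qed.

Let Ez_fin z : Ez z \is a fin_num.
Proof.
by rewrite ge0_fin_numE // (le_lt_trans (Ez_le1 z)) // ltry.
Qed.

Lemma induced_lottery : is_lottery (induced g L).
Proof.
split; first by move=> z; exact: fine_ge0 (Ez_ge0 z).
rewrite /induced sum_fine; last by move=> z _; apply: Ez_fin.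
rewrite -esum_sum; last by move=> m z _ _; rewrite lee_fin mulr_ge0 ?g_ge0 ?w_ge0.
rewrite [RHS](_ : 1 = fine (1%E : \bar R)) // -(weight_sum HL); congr fine.
apply: eq_esum => m _; rewrite sumEFin -mulr_sumr.
by case: (Hg m) => _ ->; rewrite mulr1.
Qed.

Lemma induced_pos z :
  0 < induced g L z <-> exists m : profile M, 0 < \prod_(j < n) L j (m j) /\ 0 < g m z.
Proof.
split.
  have [//|N] := pselect (exists m : profile M, 0 < \prod_(j < n) L j (m j) /\ 0 < g m z).
  rewrite /induced esum1 ?ltxx // => m _.
  have [w0|wn0] := eqVneq (\prod_(j < n) L j (m j)) 0; first by rewrite w0 mul0r.
  have [g0|gn0] := eqVneq (g m z) 0; first by rewrite g0 mulr0.
  by exfalso; apply: N; exists m; split; rewrite lt0r ?wn0 ?gn0 ?g_ge0 ?w_ge0.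
move=> [m [wp gp]]; apply: fine_gt0; apply/andP; split; last first.
  by rewrite -ge0_fin_numE; [exact: (Ez_fin z) | exact: (Ez_ge0 z)].
apply: (lt_le_trans (y := ((\prod_(j < n) L j (m j)) * g m z)%:E)).
  by rewrite lte_fin mulr_gt0.
apply: esum_ge; exists [set m]; last by rewrite fsbig_set1.
by split; [exact: finite_set1 | move=> ? ->].
Qed.
End Induced.

Section EUlemmas.
Variables (R : realType) (Z : finType).
Implicit Types (u : Z -> R) (y : Z -> R) (c : R).

Lemma EU_const u y c : is_lottery y -> (forall z, 0 < y z -> u z = c) -> EU u y = c.
Proof.
move=> [y0 y1] H; rewrite /EU (eq_bigr (fun z => y z * c)).
  by rewrite -mulr_suml y1 mul1r.
move=> z _; have := y0 z; rewrite le_eqVlt => /orP[/eqP <-|yp].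
  by rewrite !mul0r.
by rewrite H.
Qed.

Lemma EU_le u y c : is_lottery y -> (forall z, u z <= c) -> EU u y <= c.
Proof.
move=> [y0 y1] H; apply: (le_trans (y := \sum_(z : Z) y z * c)).
  by apply: ler_sum => z _; apply: ler_wpM2l.
by rewrite -mulr_suml y1 mul1r.
Qed.

Lemma EU_ge_supp u y c : is_lottery y -> (forall z, c <= u z) -> EU u y <= c ->
  forall z, 0 < y z -> u z = c.
Proof.
move=> [y0 y1] H He z yz.
have E : \sum_(z : Z) y z * (u z - c) = EU u y - c.
  rewrite /EU (eq_bigr (fun z => y z * u z - y z * c)); last by move=> ? _; rewrite mulrBr.
  by rewrite sumrB -mulr_suml y1 mul1r.
have t0 : forall z, true -> 0 <= y z * (u z - c).
  by move=> z' _; rewrite mulr_ge0 // subr_ge0.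
have S0 : \sum_(z : Z) y z * (u z - c) = 0.
  apply/eqP; rewrite eq_le sumr_ge0 // andbT E subr_le0 //.
have := psumr_eq0P t0 S0 (i := z) isT.
move/eqP; rewrite mulf_eq0 (gt_eqF yz) /= subr_eq0 => /eqP //.
Qed.
End EUlemmas.

Section Deviate.
Variables (R : realType) (n : nat) (M : 'I_n -> countType).
Local Open Scope classical_set_scope.

Lemma dev_in (L : mixed_profile R M) i (p : M i -> R) : @deviate _ _ _ L i p i = p.
Proof. exact: dfwith_in. Qed.

Lemma dev_out (L : mixed_profile R M) i (p : M i -> R) j : i != j -> @deviate _ _ _ L i p j = L j.
Proof. exact: dfwith_out. Qed.

Lemma dev_dev (L : mixed_profile R M) i (p q : M i -> R) :
  deviate (deviate L p) q = deviate L q.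
Proof.
apply: functional_extensionality_dep => j.
have [<-|ij] := eqVneq i j; first by rewrite !dev_in.
by rewrite !dev_out.
Qed.

Lemma dev_self (L : mixed_profile R M) i : deviate L (L i) = L.
Proof.
apply: functional_extensionality_dep => j.
have [<-|ij] := eqVneq i j; first by rewrite !dev_in.
by rewrite !dev_out.
Qed.

Lemma dev_mixed (L : mixed_profile R M) i (p : M i -> R) :
  is_mixed_profile L -> is_mixed p -> is_mixed_profile (deviate L p).
Proof.
move=> HL Hp j; have [<-|ij] := eqVneq i j; first by rewrite dev_in.
by rewrite dev_out.
Qed.

Lemma dirac_mixed i (x : M i) : is_mixed (@dirac R n M i x).
Proof.
split; first by move=> y; rewrite /dirac; case: eqP.
rewrite (esumID [set x]); last by move=> y _; rewrite lee_fin /dirac; case: eqP.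
rewrite setTI esum_set1; last by rewrite lee_fin /dirac eqxx.
rewrite esum1 ?adde0; first by rewrite /dirac eqxx.
by move=> y [_ /= yx]; rewrite /dirac; case: eqP.
Qed.
End Deviate.

Lemma lottery_nonempty (R : realType) (Z : finType) (y : Z -> R) :
  is_lottery y -> exists z, 0 < y z.
Proof.
move=> [y0 y1]; have [//|N] := pselect (exists z, 0 < y z).
exfalso; move: y1; rewrite big1 => [/eqP|z _]; first by rewrite eq_sym oner_eq0.
apply/eqP; rewrite eq_le y0 andbT; rewrite leNgt; apply/negP => H; apply: N.
by exists z.
Qed.

Arguments dirac_mixed {R n M i} x.
Arguments lottery_nonempty {R Z y}.
Arguments dev_mixed {R n M L i p}.
Arguments induced_lottery {R Z n M g} Hg {L} HL.
Arguments induced_pos {R Z n M g} Hg {L} HL z.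
Arguments EU_const {R Z u y c}.
Arguments EU_le {R Z u y c}.
Arguments EU_ge_supp {R Z u y c}.
Arguments dev_dev {R n M L i p q}.
Arguments dev_self {R n M L i}.
Arguments dev_in {R n M L i p}.
Arguments dev_out {R n M L i p j}.

Theorem lemma1 (R : realType) (n : nat) (Z : finType) (Theta : countType)
    (u : 'I_n -> Theta -> Z -> R) (M : 'I_n -> countType)
    (g : profile M -> Z -> R) (f : Theta -> Z)
    (i : 'I_n) (th : Theta) (lam : mixed_profile R M) :
  (3 <= n)%N ->
  is_mechanism g ->
  mixed_Nash_implements u g f ->
  MNE u g th lam ->
  (forall z, u i th (f th) <= u i th z) ->
  is_i_max_set u i (LZ u i (f th) th) ->
  forall z,
    (exists mi : M i, SUPP (induced g (deviate lam (@dirac R n M i mi))) z) <-> z = f th.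
Proof.
move=> _ Hg Himpl [Hlm Hne] Hmin [th' [[e0 He0] [HEi HEj]]] z.
have Lsupp : forall z0, 0 < induced g lam z0 -> z0 = f th.
  by move=> z0 H; apply/(Himpl th z0).1; exists lam; split.
have EUlam : EU (u i th) (induced g lam) = u i th (f th).
  by apply: (EU_const (induced_lottery Hg Hlm)) => z0 /Lsupp ->.
have Hdev : forall (mi : M i) z0, 0 < induced g (deviate lam (dirac R mi)) z0 ->
    LZ u i (f th) th z0.
  move=> mi z0 Hz.
  have := Hne i (dirac R mi) (dirac_mixed mi); rewrite EUlam => Hle.
  have := EU_ge_supp (induced_lottery Hg (dev_mixed Hlm (dirac_mixed mi))) Hmin Hle z0 Hz.
  by rewrite /LZ /= => ->.
have Hm : forall (m : profile M) z0, (forall j, j != i -> 0 < lam j (m j)) ->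
    0 < g m z0 -> LZ u i (f th) th z0.
  move=> m z0 Hpos gp; apply: (Hdev (m i)).
  apply/(induced_pos Hg (dev_mixed Hlm (dirac_mixed (m i))) z0); exists m; split => //.
  apply: prodr_gt0 => j _; have [<-|ij] := eqVneq i j.
    by rewrite dev_in /dirac eqxx ltr01.
  by rewrite dev_out // Hpos // eq_sym.
have Hsupp : forall (p : M i -> R), is_mixed p -> forall z0,
    0 < induced g (deviate lam p) z0 -> LZ u i (f th) th z0.
  move=> p Hp z0 /(induced_pos Hg (dev_mixed Hlm Hp) z0) [m [wp gp]].
  apply: (Hm m) => // j ij.
  have : \prod_(j < n) @deviate _ _ _ lam i p j (m j) != 0 by rewrite gt_eqF.
  move/prodf_neq0 => /(_ j isT) nz0.
  have nz : lam j (m j) != 0 by move: nz0; rewrite dev_out // eq_sym.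
  by rewrite lt0r nz; case: (Hlm j) => + _; apply.
have Ei : forall z0, LZ u i (f th) th z0 -> u i th' z0 = u i th' e0.
  move=> z0 Hz; apply/eqP; rewrite eq_le.
  by rewrite (HEi e0 He0 z0 Hz) (HEi z0 Hz e0 He0).
have Ej : forall j, j != i -> forall z0, LZ u i (f th) th z0 -> u j th' z0 = u j th' e0.
  move=> j ij z0 Hz; apply/eqP; rewrite eq_le.
  by rewrite (HEj j ij z0 Hz e0) (HEj j ij e0 He0 z0).
have HMNE : forall (p : M i -> R), is_mixed p -> MNE u g th' (deviate lam p).
  move=> p Hp; split; first exact: dev_mixed.
  move=> j q Hq.
  have [eij|ij] := eqVneq j i.
    subst j; rewrite dev_dev.
    rewrite (EU_const (c := u i th' e0) (induced_lottery Hg (dev_mixed Hlm Hq))).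
      rewrite (EU_const (c := u i th' e0) (induced_lottery Hg (dev_mixed Hlm Hp))) //.
      by move=> z0 /(Hsupp p Hp) /Ei.
    by move=> z0 /(Hsupp q Hq) /Ei.
  apply: le_trans (EU_le (induced_lottery Hg (dev_mixed (dev_mixed Hlm Hp) Hq))
      (fun z' => HEj j ij e0 He0 z')) _.
  rewrite (EU_const (c := u j th' e0) (induced_lottery Hg (dev_mixed Hlm Hp))) //.
  by move=> z0 /(Hsupp p Hp) /(Ej j ij).
have Hf : f th' = f th.
  have Hl' := HMNE (lam i) (Hlm i); rewrite dev_self in Hl'.
  have [z1 Hz1] := lottery_nonempty (induced_lottery Hg Hlm).
  rewrite -(Lsupp z1 Hz1); apply/esym; apply/(Himpl th' z1).1; exists lam; split => //.
split.
  move=> [mi Hs]; rewrite -Hf; apply/(Himpl th' z).1.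
  exists (deviate lam (dirac R mi)); split => //; exact: HMNE _ (dirac_mixed mi).
move=> ->; have [mi _] := mixed_nonempty (Hlm i).
have [z1 Hz1] := lottery_nonempty (induced_lottery Hg (dev_mixed Hlm (dirac_mixed mi))).
exists mi; have : z1 = f th'.
  by apply/(Himpl th' z1).1; exists (deviate lam (dirac R mi)); split => //; exact: HMNE _ (dirac_mixed mi).
by rewrite Hf => <-.
Qed.
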